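(* Let $M$ be a model with borders and let $f:M^s\to U(n)$ be the unique p-morphism (with image $M_{\wedge,\to}$). For any $w\in M^s$ and any $(\wedge,\to)$-formula $\varphi$, \[ M,w\models\varphi \iff M_{\wedge,\to},f(w)\models\varphi. \]
   Context: Fix $n\ge1$ and variables $p_1,\dots,p_n$; $2^n=\{0,1\}^n$ with componentwise order. A model is $(M,\le,c)$, $(M,\le)$ a poset, $c:M\to 2^n$ order-preserving, with intuitionistic Kripke semantics. A p-morphism of models is an order- and colour-preserving map $f$ such that $f(x)\le y$ implies $f(x')=y$ for some $x'\ge x$. A $(\wedge,\to)$-formula uses only $\wedge$ and $\to$. A point $x$ is a $q$-border point if $x\not\models q$ and all $y>x$ satisfy $q$; $x$ is separated if it is a $q$-border point for some variable $q$. $M^s$: separated points with restricted order and colouring (a model in its own right; all its chains have at most $n$ elements). $M$ has borders if for every variable $p$ and every $x$ with $x\not\models p$ there is a $p$-border point $y\ge x$. $U(n)$ is the $n$-universal model: the generated submodel of the canonical model of IPC on $p_1,\dots,p_n$ (prime filters of the free Heyting algebra ordered by inclusion, $c(x)_i=1$ iff $p_i\in x$) consisting of points with finite up-set. For every model of finite depth there is a unique p-morphism into $U(n)$. $M_{\wedge,\to}$ is the image of the unique p-morphism $M^s\to U(n)$, a generated submodel of $U(n)$. *)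

(* Defs.v *)
From Stdlib Require Import ProofIrrelevance.
From mathcomp Require Import all_boot.

(* A model on the variables p_0..p_{n-1} (indexed by 'I_n):
   a poset (carrier, le) with an order-preserving colouring c : M -> 2^n,
   represented as col x i = i-th bit of c(x). *)
Record model (n : nat) := Model {
  carrier :> Type;
  le : carrier -> carrier -> Prop;
  col : carrier -> 'I_n -> bool;
  le_refl : forall x, le x x;
  le_trans : forall x y z, le x y -> le y z -> le x z;
  le_antisym : forall x y, le x y -> le y x -> x = y;
  col_mono : forall x y i, le x y -> col x i -> col y i
}.
Arguments le {n} m _ _.
Arguments col {n} m _ _.

Definition lt {n} (M : model n) (x y : M) : Prop := le M x y /\ x <> y.

Inductive form (n : nat) : Type :=
| Var : 'I_n -> form n
| Bot : form n
| And : form n -> form n -> form n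
| Or  : form n -> form n -> form n
| Imp : form n -> form n -> form n.
Arguments Bot {n}.

Fixpoint and_imp_form {n} (phi : form n) : Prop :=
  match phi with
  | Var _ => True
  | Bot => False
  | And a b => and_imp_form a /\ and_imp_form b
  | Or _ _ => False
  | Imp a b => and_imp_form a /\ and_imp_form b
  end.

Fixpoint forces {n} (M : model n) (x : M) (phi : form n) : Prop :=
  match phi with
  | Var i => col M x i = true
  | Bot => False
  | And a b => forces M x a /\ forces M x b
  | Or a b => forces M x a \/ forces M x b
  | Imp a b => forall y, le M x y -> forces M y a -> forces M y b
  end.

Definition border {n} (M : model n) (q : 'I_n) (x : M) : Prop :=
  col M x q = false /\ forall y, lt M x y -> col M y q = true.

Definition separated {n} (M : model n) (x : M) : Prop :=
  exists q, border M q x.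

Definition has_borders {n} (M : model n) : Prop :=
  forall (p : 'I_n) (x : M), col M x p = false ->
    exists y, le M x y /\ border M p y.

Section Restrict.
Variables (n : nat) (M : model n) (P : M -> Prop).
Definition rcar := {x : M | P x}.
Definition rle (x y : rcar) : Prop := le M (proj1_sig x) (proj1_sig y).
Definition rcol (x : rcar) (i : 'I_n) : bool := col M (proj1_sig x) i.
Lemma rle_refl x : rle x x. Proof. exact: le_refl. Qed.
Lemma rle_trans x y z : rle x y -> rle y z -> rle x z.
Proof. exact: le_trans. Qed.
Lemma rle_antisym x y : rle x y -> rle y x -> x = y.
Proof.
case: x => x px; case: y => y py; rewrite /rle /= => h1 h2.
move: (@le_antisym _ M _ _ h1 h2) => e; subst y.
by rewrite (proof_irrelevance _ px py).
Qed.
Lemma rcol_mono x y i : rle x y -> rcol x i -> rcol y i.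
Proof. exact: col_mono. Qed.
Definition restrict : model n :=
  @Model n rcar rle rcol rle_refl rle_trans rle_antisym rcol_mono.
End Restrict.
Arguments restrict {n} M P.

Definition sep_model {n} (M : model n) : model n := restrict M (separated M).

Definition pmorphism {n} (M N : model n) (f : M -> N) : Prop :=
  (forall x y, le M x y -> le N (f x) (f y)) /\
  (forall x, col N (f x) = col M x) /\
  (forall x y, le N (f x) y -> exists x', le M x x' /\ f x' = y).

Definition image_model {n} (M N : model n) (f : M -> N) : model n :=
  restrict N (fun y => exists x, f x = y).

Definition image_point {n} (M N : model n) (f : M -> N) (x : M)
  : image_model M N f :=
  exist (fun y => exists x, f x = y) (f x) (ex_intro _ x erefl).

(* Main.v *)
Require Import Defs.
From Stdlib Require Import Classical ProofIrrelevance.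
From mathcomp Require Import all_boot.

Lemma persist {n} (M : model n) (phi : form n) :
  forall x y, le M x y -> forces M x phi -> forces M y phi.
Proof.
elim: phi => [i||a IHa b IHb|a IHa b IHb|a IHa b IHb] x y hxy /=.
- move=> h; exact: (@col_mono _ M x y i hxy h).
- by [].
- by case=> h1 h2; split; [apply: IHa hxy h1|apply: IHb hxy h2].
- by case=> h; [left; apply: IHa hxy h|right; apply: IHb hxy h].
- move=> h z hyz; apply: h; exact: le_trans hxy hyz.
Qed.

Lemma pmorph_forces {n} (A B : model n) (g : A -> B) (hg : pmorphism A B g)
  (phi : form n) : forall x, forces A x phi <-> forces B (g x) phi.
Proof.
case: hg => [hle [hcol hback]].
elim: phi => [i||a IHa b IHb|a IHa b IHb|a IHa b IHb] x /=.
- by rewrite hcol.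
- by [].
- by move: (IHa x) (IHb x); tauto.
- by move: (IHa x) (IHb x); tauto.
- split.
  + move=> h y hy ha. case: (hback _ _ hy) => x' [hx' e]; subst y.
    apply (proj1 (IHb _)); apply: (h _ hx'); exact: (proj2 (IHa _) ha).
  + move=> h y hy ha. apply (proj2 (IHb _)); apply: (h _ (hle _ _ hy)); exact: (proj1 (IHa _)).
Qed.

Lemma refute_sep {n} (M : model n) (hM : has_borders M) (phi : form n) :
  and_imp_form phi -> forall x, ~ forces M x phi ->
  exists z, le M x z /\ separated M z /\ ~ forces M z phi.
Proof.
elim: phi => [i||a IHa b IHb|a IHa b IHb|a IHa b IHb] //= hphi x hx.
- have hc : col M x i = false by case: (col M x i) hx => //= /(_ erefl).
  case: (hM _ _ hc) => y [hxy hb]; exists y; split => //; split.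
  + by exists i.
  + by case: hb => -> _.
- case: hphi => ha hb.
  case: (classic (forces M x a)) => hxa.
  + have hxb : ~ forces M x b by move=> hxb; apply: hx.
    case: (IHb hb x hxb) => z [hz [hs hnz]]; exists z; do 2!split => //.
    by case.
  + case: (IHa ha x hxa) => z [hz [hs hnz]]; exists z; do 2!split => //.
    by case.
- case: hphi => ha hb.
  have [y [hy [hya hyb]]] : exists y, le M x y /\ forces M y a /\ ~ forces M y b.
    apply: NNPP => hn; apply: hx => y hy hya.
    apply: NNPP => hyb; apply: hn; exists y; tauto.
  case: (IHb hb y hyb) => z [hz [hs hnz]]; exists z; split.
    exact: le_trans hy hz.
  split => // h; apply: hnz; apply: (h z (@le_refl _ M z)).
  exact: persist hz hya.
Qed.

Lemma sep_forces {n} (M : model n) (hM : has_borders M) (phi : form n) :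
  and_imp_form phi -> forall w : sep_model M,
  forces M (proj1_sig w) phi <-> forces (sep_model M) w phi.
Proof.
elim: phi => [i||a IHa b IHb|a IHa b IHb|a IHa b IHb] //= hphi w.
- case: hphi => ha hb; by move: (IHa ha w) (IHb hb w); tauto.
- case: hphi => ha hb; split.
  + move=> h y hy hya; apply (proj1 (IHb hb _)); apply: (h _ hy); exact: (proj2 (IHa ha _)).
  + move=> h y hy hya; apply: NNPP => hyb.
    case: (refute_sep _ hM _ hb _ hyb) => z [hz [hs hnz]].
    apply: hnz.
    apply (proj2 (IHb hb (exist _ z hs))).
    apply: h.
      rewrite /rle /=; exact: le_trans hy hz.
    apply (proj1 (IHa ha (exist _ z hs))) => /=; exact: persist hz hya.
Qed.

Lemma image_pmorph {n} (A N : model n) (f : A -> N) (hf : pmorphism A N f) :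
  pmorphism A (image_model A N f) (image_point A N f).
Proof.
case: hf => [hle [hcol hback]]; split; [|split].
- move=> x y h; exact: hle.
- move=> x; exact: hcol.
- move=> x [y py] h. case: (hback _ _ h) => x' [hx' e].
  exists x'; split => //; clear h; move: e => /= e; subst y.
  rewrite /image_point; f_equal; exact: proof_irrelevance.
Qed.

(* f : M^s -> N is a p-morphism; the paper's case is N = U(n) and f the unique
   p-morphism, whose image M_{/\,->} is image_model. *)
Theorem proposition3p12 (n : nat) (hn : 1 <= n) (M : model n)
  (hM : has_borders M) (N : model n) (f : sep_model M -> N)
  (hf : pmorphism (sep_model M) N f)
  (w : sep_model M) (phi : form n) (hphi : and_imp_form phi) :
  forces M (proj1_sig w) phi <->
  forces (image_model (sep_model M) N f) (image_point (sep_model M) N f w) phi.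
Proof.
have h1 := sep_forces _ hM _ hphi w.
have h2 := pmorph_forces _ _ _ (image_pmorph _ _ _ hf) phi w.
tauto.
Qed.
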